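(* Let $m\ge 2$, $\rho\ge 0$, and consider the Mallows culture on candidates $\{1,\dots,m\}$ with reference ranking $(m,m-1,\dots,1)$ (candidate $m$ first) and concentration parameter $\rho$. With $\boldsymbol\beta=(\frac12,\dots,\frac12)$, the log saddle point is \[ \boldsymbol\tau=\Big(\frac{m\rho}{2},\frac{(m-2)\rho}{2},\dots,\frac{(-m+4)\rho}{2}\Big), \] i.e. $\tau_j=\frac{(m-2(j-1))\rho}{2}$ for $j=1,\dots,m-1$.
   Context: Mallows culture with reference ranking $r_0$ and parameter $\rho\ge0$: a ranking $r$ has probability $p_r=\gamma e^{-\rho d(r,r_0)}$ where $d$ is the Kendall tau distance (number of pairs of candidates ordered differently in $r$ and $r_0$) and $\gamma$ normalizes $\sum_rp_r=1$. Let $\mathcal{A}=\{1,\dots,m-1\}$; for $\mathcal{X}\subseteq\mathcal{A}$, $p_{\mathcal{X}}$ is the probability that the set of candidates ranked above $m$ is exactly $\mathcal{X}$, and $P(\mathbf{x})=\sum_{\mathcal{X}\subseteq\mathcal{A}}p_{\mathcal{X}}\prod_{j\in\mathcal{X}}x_j$. With $K(\mathbf{t})=\log P(e^{t_1},\dots,e^{t_{m-1}})$, the log saddle point $\boldsymbol\tau$ is the unique maximizer over $\mathbb{R}^{m-1}$ of $-K(\mathbf{t})+\boldsymbol\beta^T\mathbf{t}$. *)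

(* Defs.v *)
From HB Require Import structures.
From mathcomp Require Import all_boot all_order all_algebra all_fingroup.
From mathcomp Require Import reals sequences exp.
Set Implicit Arguments. Unset Strict Implicit. Unset Printing Implicit Defensive.
Import Order.TTheory GRing.Theory Num.Theory.
Local Open Scope ring_scope.

(* Candidates {1,...,m} are represented by 'I_m : index c stands for candidate c+1.
   A ranking is a permutation r : {perm 'I_m}; r c is the position (0 = top)
   of candidate c+1. *)

Definition kendall (k : nat) (r r' : {perm 'I_k}) : nat :=
  #|[set p : 'I_k * 'I_k | (p.1 < p.2)%N &&
       ((r p.1 < r p.2)%N != (r' p.1 < r' p.2)%N)]|.

(* Reference ranking (m, m-1, ..., 1): candidate c+1 is at position m-1-c. *)
Definition ref_rank (k : nat) : {perm 'I_k} := perm (@rev_ord_inj k).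

Definition mallows_prob (R : realType) (k : nat) (rho : R) (r : {perm 'I_k}) : R :=
  expR (- rho * (kendall r (ref_rank k))%:R)
  / \sum_(s : {perm 'I_k}) expR (- rho * (kendall s (ref_rank k))%:R).

(* From here on m = n.+1 candidates: candidate m is ord_max, and the
   candidates of A = {1,...,m-1} are indexed by j : 'I_n (candidate j+1). *)
Definition candA (n : nat) (j : 'I_n) : 'I_n.+1 := widen_ord (leqnSn n) j.

Definition above (n : nat) (r : {perm 'I_n.+1}) : {set 'I_n} :=
  [set j | (r (candA j) < r ord_max)%N].

Definition pX (R : realType) (n : nat) (rho : R) (X : {set 'I_n}) : R :=
  \sum_(r : {perm 'I_n.+1} | above r == X) mallows_prob rho r.

Definition Ppoly (R : realType) (n : nat) (rho : R) (x : 'I_n -> R) : R :=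
  \sum_(X : {set 'I_n}) pX rho X * \prod_(j in X) x j.

Definition Kcgf (R : realType) (n : nat) (rho : R) (t : 'I_n -> R) : R :=
  ln (Ppoly rho (fun j => expR (t j))).

Definition saddle_obj (R : realType) (n : nat) (rho : R) (beta t : 'I_n -> R) : R :=
  - Kcgf rho t + \sum_(j < n) beta j * t j.

Definition is_log_saddle_point (R : realType) (n : nat) (rho : R)
    (beta tau : 'I_n -> R) : Prop :=
  (forall t, saddle_obj rho beta t <= saddle_obj rho beta tau) /\
  (forall t, (forall s, saddle_obj rho beta s <= saddle_obj rho beta t) ->
     forall j, t j = tau j).

(* Main.v *)
Require Import Defs.
From HB Require Import structures.
From mathcomp Require Import all_boot all_order all_algebra all_fingroup.
From mathcomp Require Import reals sequences exp.
From mathcomp Require Import zify ring lra.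
Import Order.TTheory GRing.Theory Num.Theory.
Set Implicit Arguments. Unset Strict Implicit. Unset Printing Implicit Defensive.
Local Open Scope ring_scope.
Definition gpos (n k p : nat) : nat :=
  if (p < k)%N then (p + n.+1 - k)%N else if p == k then (n - k)%N else (p - k.+1)%N.

Lemma gpos_lt n k p : (k <= n)%N -> (p <= n)%N -> (gpos n k p < n.+1)%N.
Proof. move=> hk hp; rewrite /gpos; case: (ssrnat.ltngtP p k) => h; lia. Qed.

Definition gfun n (k p : 'I_n.+1) : 'I_n.+1 := inord (gpos n k p).

Lemma gfunE n (k p : 'I_n.+1) : (gfun k p : nat) = gpos n k p.
Proof. rewrite /gfun inordK //; apply: gpos_lt; rewrite -ltnS; exact: ltn_ord. Qed.

Lemma gK n (k : 'I_n.+1) : cancel (gfun k) (gfun (rev_ord k)).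
Proof.
move=> p; apply: val_inj; rewrite /= !gfunE /=.
have hk := ltn_ord k; have hp := ltn_ord p.
rewrite /gpos; case: (ssrnat.ltngtP (nat_of_ord p) (nat_of_ord k)) => h1.
- case: ssrnat.ltngtP => h2 /=; try lia.
- case: ssrnat.ltngtP => h2 /=; try lia.
- case: ssrnat.ltngtP => h2 /=; try lia.
Qed.

Definition gperm n (k : 'I_n.+1) : {perm 'I_n.+1} := perm (can_inj (gK k)).

Definition Phi n (r : {perm 'I_n.+1}) : {perm 'I_n.+1} := r * gperm (r ord_max).

Lemma PhiE n (r : {perm 'I_n.+1}) c : Phi r c = gfun (r ord_max) (r c).
Proof. by rewrite /Phi permM permE. Qed.

Lemma Phi_max n (r : {perm 'I_n.+1}) : Phi r ord_max = rev_ord (r ord_max).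
Proof.
apply: val_inj; rewrite /= PhiE gfunE /gpos ltnn eqxx; lia.
Qed.

Lemma PhiK n : involutive (@Phi n).
Proof.
move=> r; apply/permP => c; rewrite PhiE Phi_max PhiE.
by rewrite gK.
Qed.
Lemma gpos_cmp n k x y : (k <= n)%N -> (x <= n)%N -> (y <= n)%N -> x != y ->
 (gpos n k x < gpos n k y)%N =
   (if (x < k)%N then (y < k) && (x < y) else if x == k then (y < k)%N
    else (y <= k) || (x < y))%N.
Proof.
move=> hk hx hy hxy; rewrite /gpos.
case: (ssrnat.ltngtP x k) => h1; case: (ssrnat.ltngtP y k) => h2;
  case: (ssrnat.ltngtP x y) => h3 //=; try lia.
Qed.
Lemma candA_neq n (j : 'I_n) : candA j != ord_max.
Proof. by rewrite -val_eqE /= neq_ltn ltn_ord. Qed.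

Lemma above_Phi n (r : {perm 'I_n.+1}) : above (Phi r) = ~: above r.
Proof.
apply/setP => j; rewrite !inE PhiE Phi_max gfunE /=.
have hne : (r (candA j) : nat) != r ord_max.
  by rewrite val_eqE (inj_eq perm_inj) candA_neq.
have := ltn_ord (r (candA j)); have := ltn_ord (r ord_max).
move: hne; rewrite /gpos.
case: (ssrnat.ltngtP (r (candA j) : nat) (r ord_max)) => h //=; lia.
Qed.

Definition sg (R : realType) n (r : {perm 'I_n.+1}) (c : 'I_n.+1) : R :=
  ((r ord_max < r c)%N%:R - (r c < r ord_max)%N%:R).

Lemma pair_diff (R : realType) n (r : {perm 'I_n.+1}) (a b : 'I_n.+1) : (a < b)%N ->
  ((Phi r a < Phi r b)%N%:R - (r a < r b)%N%:R : R) =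
  (sg R r a - sg R r b) / 2 + (b == ord_max)%:R * sg R r a / 2.
Proof.
move=> hab; rewrite /sg !PhiE !gfunE.
have hab' : (r a : nat) != r b by rewrite val_eqE (inj_eq perm_inj) -val_eqE /= neq_ltn hab.
have ha : (r a : nat) != r ord_max.
  by rewrite val_eqE (inj_eq perm_inj) -val_eqE /= neq_ltn (leq_trans hab) // -ltnS.
have -> : (b == ord_max) = ((r b : nat) == r ord_max) by rewrite val_eqE (inj_eq perm_inj).
have := ltn_ord (r a); have := ltn_ord (r b); have := ltn_ord (r ord_max).
move: (r a : nat) (r b : nat) (r ord_max : nat) hab' ha => x y k hxy hxk hk hy hx.
rewrite gpos_cmp //; try lia.
move: hxy hxk.
case: (ssrnat.ltngtP x k) => h1; case: (ssrnat.ltngtP y k) => h2;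
  case: (ssrnat.ltngtP x y) => h3 //= _ _.
all: try (exfalso; lia).
all: lra.
Qed.
Lemma kendall_sum (R : realType) n (r : {perm 'I_n.+1}) :
  ((kendall r (ref_rank n.+1))%:R : R) =
  \sum_(a : 'I_n.+1) \sum_(b : 'I_n.+1) ((a < b)%N%:R * (r a < r b)%N%:R).
Proof.
rewrite /kendall -sum1dep_card natr_sum big_mkcond /=.
rewrite (pair_bigA _ (fun a b : 'I_n.+1 => ((a < b)%N%:R * (r a < r b)%N%:R : R))) /=.
apply: eq_bigr => -[a b] _ /=; rewrite /ref_rank !permE /=.
case hab: (a < b)%N => /=; last by rewrite mul0r.
have -> : (n.+1 - a.+1 < n.+1 - b.+1)%N = false.
  have := ltn_ord b; lia.
by case: (r a < r b)%N; rewrite /= ?mul1r.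
Qed.

Lemma dsum (R : realType) (N : nat) (s : nat -> R) :
  \sum_(0 <= a < N) \sum_(0 <= b < N) ((a < b)%N%:R * (s a - s b)) =
  \sum_(0 <= a < N) s a * (N%:R - 1 - 2 * a%:R).
Proof.
elim: N => [|N IH]; first by rewrite !big_geq.
rewrite big_nat_recr //=.
rewrite (@eq_big_nat _ _ _ 0 N _ (fun a => \sum_(0 <= b < N) ((a < b)%N%:R * (s a - s b)) + (s a - s N))); last first.
  move=> a /andP [_ ha] /=; rewrite big_nat_recr //= ha mul1r //.
rewrite big_split /= IH.
have -> : \sum_(0 <= b < N.+1) ((N < b)%N%:R * (s N - s b) : R) = 0.
  apply: big1_seq => b; rewrite mem_index_iota => hb.
  have -> : (N < b)%N = false by lia.
  by rewrite mul0r.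
rewrite addr0 [in RHS]big_nat_recr //= sumrB sumr_const_nat subn0.
have -> : \sum_(0 <= a < N) s a * (N.+1%:R - 1 - 2 * a%:R) =
  \sum_(0 <= a < N) s a * (N%:R - 1 - 2 * a%:R) + \sum_(0 <= a < N) s a.
  rewrite -big_split /=; apply: eq_bigr => a _; rewrite -natr1; ring.
rewrite -mulr_natr -[N.+1%:R]natr1; ring.
Qed.
Definition tauf (R : realType) n (rho : R) (j : 'I_n) : R :=
  ((n.+1)%:R - 2 * (j : nat)%:R) * rho / 2.

Lemma sg_max (R : realType) n (r : {perm 'I_n.+1}) : sg R r ord_max = 0.
Proof. by rewrite /sg ltnn subrr. Qed.

Lemma D_formula (R : realType) n (r : {perm 'I_n.+1}) :
  ((kendall (Phi r) (ref_rank n.+1))%:R - (kendall r (ref_rank n.+1))%:R : R) =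
  \sum_(j < n) sg R r (candA j) * ((n.+1)%:R - 2 * (j : nat)%:R) / 2.
Proof.
rewrite !kendall_sum -sumrB.
rewrite (eq_bigr (fun a : 'I_n.+1 => \sum_(b : 'I_n.+1) ((a < b)%N%:R *
   ((sg R r a - sg R r b) / 2 + (b == ord_max)%:R * sg R r a / 2)))); last first.
  move=> a _; rewrite -sumrB; apply: eq_bigr => b _.
  rewrite -mulrBr; case hab: (a < b)%N; last by rewrite !mul0r.
  by rewrite pair_diff.
under eq_bigr do rewrite (eq_bigr _ (fun b _ => mulrDr _ _ _)) big_split /=.
rewrite big_split /=.
set sn := fun i : nat => sg R r (inord i).
have E1 : \sum_(a : 'I_n.+1) \sum_(b : 'I_n.+1) ((a < b)%N%:R * ((sg R r a - sg R r b) / 2)) =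
   (\sum_(0 <= a < n.+1) \sum_(0 <= b < n.+1) ((a < b)%N%:R * (sn a - sn b))) / 2.
  rewrite mulr_suml big_mkord; apply: eq_bigr => a _.
  rewrite mulr_suml big_mkord; apply: eq_bigr => b _.
  by rewrite /sn !inord_val mulrA.
have E2 : \sum_(a : 'I_n.+1) \sum_(b : 'I_n.+1) ((a < b)%N%:R * ((b == ord_max)%:R * sg R r a / 2)) =
   \sum_(j < n) sg R r (candA j) / 2.
  rewrite big_ord_recr /= sg_max.
  rewrite [X in _ + X]big1 ?addr0; last first.
    move=> b _ /=; have -> : (n < b)%N = false by have := ltn_ord b; lia.
    by rewrite mul0r.
  apply: eq_bigr => j _.
  rewrite (bigD1 ord_max) //= big1 ?addr0; last first.
    by move=> b /negbTE ->; rewrite !mul0r mulr0.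
  by rewrite eqxx ltn_ord !mul1r.
rewrite E1 E2 dsum big_nat_recr //=.
have -> : sn n = 0 by rewrite /sn -(sg_max R r); congr (sg R r _); apply: val_inj; rewrite /= inordK.
rewrite mul0r addr0 big_mkord mulr_suml -big_split /=.
apply: eq_bigr => j _.
have -> : sn j = sg R r (candA j).
  by rewrite /sn; congr (sg R r _); apply: val_inj; rewrite /= inordK // ltnS ltnW.
rewrite -natr1; ring.
Qed.
Lemma key_r (R : realType) n (rho : R) (r : {perm 'I_n.+1}) :
  - rho * (kendall (Phi r) (ref_rank n.+1))%:R + \sum_(j in ~: above r) tauf rho j =
  - rho * (kendall r (ref_rank n.+1))%:R + \sum_(j in above r) tauf rho j.
Proof.
have HD := D_formula R r.
have HT : \sum_(j in ~: above r) tauf rho j - \sum_(j in above r) tauf rho j =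
   \sum_(j < n) tauf rho j * sg R r (candA j).
  rewrite (big_mkcond (fun j => j \in ~: above r)) (big_mkcond (fun j => j \in above r)).
  rewrite -sumrB; apply: eq_bigr => j _; rewrite !inE /sg.
  have hne : (r (candA j) : nat) != r ord_max.
    by rewrite val_eqE (inj_eq perm_inj) candA_neq.
  move: hne; case: (ssrnat.ltngtP (r (candA j) : nat) (r ord_max)) => h //= _.
    1,2: ring.
have HR : rho * ((kendall (Phi r) (ref_rank n.+1))%:R - (kendall r (ref_rank n.+1))%:R) =
   \sum_(j in ~: above r) tauf rho j - \sum_(j in above r) tauf rho j.
  rewrite HD HT mulr_sumr; apply: eq_bigr => j _; rewrite /tauf; ring.
apply/eqP; rewrite -subr_eq0; apply/eqP.
set a := (kendall (Phi r) _)%:R in HR *; set b := (kendall r _)%:R in HR *.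
set T1 := \sum_(j in ~: above r) _ in HR *; set T2 := \sum_(j in above r) _ in HR *.
transitivity (T1 - T2 - rho * (a - b)); first ring.
by rewrite HR subrr.
Qed.

Definition wX (R : realType) n (rho : R) (X : {set 'I_n}) : R :=
  pX rho X * expR (\sum_(j in X) tauf rho j).

Lemma wXC (R : realType) n (rho : R) (X : {set 'I_n}) : wX rho (~: X) = wX rho X.
Proof.
rewrite /wX /pX (reindex_inj (inv_inj (@PhiK n))) /=.
rewrite (eq_bigl (fun r => above r == X)); last first.
  by move=> r; rewrite above_Phi (inj_eq (@setC_inj _)).
rewrite !mulr_suml; apply: eq_bigr => r /eqP <-.
rewrite /mallows_prob mulrAC [in RHS]mulrAC -!expRD.
by rewrite key_r.
Qed.
Lemma Zpos (R : realType) k (rho : R) :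
  0 < \sum_(s : {perm 'I_k}) expR (- rho * (kendall s (ref_rank k))%:R).
Proof.
rewrite (bigD1 1%g) //=.
set x := expR _; set y := \sum_(i | _) _.
have h1 : 0 < x by apply: expR_gt0.
have h2 : 0 <= y by apply: sumr_ge0 => s _; rewrite ltW // expR_gt0.
lra.
Qed.

Lemma mallows_pos (R : realType) k (rho : R) r : 0 < mallows_prob rho (r : {perm 'I_k}).
Proof. by rewrite /mallows_prob divr_gt0 ?expR_gt0 ?Zpos. Qed.

Lemma pX_ge0 (R : realType) n (rho : R) X : 0 <= pX rho (X : {set 'I_n}).
Proof. by rewrite /pX sumr_ge0 // => r _; rewrite ltW // mallows_pos. Qed.

Lemma pX_gt0 (R : realType) n (rho : R) (r : {perm 'I_n.+1}) : 0 < pX rho (above r).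
Proof.
rewrite /pX (bigD1 r) //=.
set x := mallows_prob _ _; set y := \sum_(i | _) _.
have h1 : 0 < x by apply: mallows_pos.
have h2 : 0 <= y by apply: sumr_ge0 => s _; rewrite ltW // mallows_pos.
lra.
Qed.

Lemma wX_ge0 (R : realType) n (rho : R) X : 0 <= wX rho (X : {set 'I_n}).
Proof. by rewrite /wX mulr_ge0 ?pX_ge0 // ltW // expR_gt0. Qed.

Lemma wX_gt0 (R : realType) n (rho : R) (r : {perm 'I_n.+1}) : 0 < wX rho (above r).
Proof. by rewrite /wX mulr_gt0 ?pX_gt0 // expR_gt0. Qed.

Lemma above1 n : above (1%g : {perm 'I_n.+1}) = setT.
Proof. by apply/setP => j; rewrite !inE !perm1 /= ltn_ord. Qed.

Lemma above_tperm n (j : 'I_n) :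
  above (tperm (candA j) ord_max) = [set i : 'I_n | (i < j)%N].
Proof.
apply/setP => i; rewrite !inE tpermR.
case: (eqVneq i j) => [->|hij]; first by rewrite tpermL /= ltnn ltnNge ltnW.
rewrite tpermD //; first by rewrite -val_eqE /= val_eqE eq_sym.
by rewrite eq_sym candA_neq.
Qed.

Lemma amgm_sq (R : realType) (a b : R) :
  expR a + expR b - 2 * expR ((a + b) / 2) = (expR (a / 2) - expR (b / 2)) ^+ 2.
Proof.
have ea : expR a = expR (a / 2) ^+ 2 by rewrite expr2 -expRD; congr expR; lra.
have eb : expR b = expR (b / 2) ^+ 2 by rewrite expr2 -expRD; congr expR; lra.
have eab : expR ((a + b) / 2) = expR (a / 2) * expR (b / 2) by rewrite -expRD; congr expR; lra.
rewrite ea eb eab; ring.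
Qed.

Lemma amgm_eq (R : realType) (a b : R) :
  (expR (a / 2) - expR (b / 2)) ^+ 2 = 0 -> a = b.
Proof.
move/eqP; rewrite sqrf_eq0 subr_eq0 => /eqP /expR_inj h.
by have := congr1 (fun x => x * 2) h; rewrite /= !mulfVK ?pnatr_eq0.
Qed.
Lemma splitC (R : realType) n (u : 'I_n -> R) (X : {set 'I_n}) :
  \sum_(j in X) u j + \sum_(j in ~: X) u j = \sum_j u j.
Proof.
rewrite (big_mkcond (fun j => j \in X)) (big_mkcond (fun j => j \in ~: X)) -big_split.
by apply: eq_bigr => j _; rewrite inE; case: (j \in X); rewrite /= ?addr0 ?add0r.
Qed.

Lemma Ppoly_eq (R : realType) n (rho : R) (t : 'I_n -> R) :
  Ppoly rho (fun j => expR (t j)) =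
  \sum_(X : {set 'I_n}) wX rho X * expR (\sum_(j in X) (t j - tauf rho j)).
Proof.
rewrite /Ppoly; apply: eq_bigr => X _; rewrite /wX -expR_sum -mulrA -expRD.
by rewrite sumrB; congr (_ * expR _); ring.
Qed.

Lemma E_sq (R : realType) n (rho : R) (u : 'I_n -> R) :
  2 * (\sum_(X : {set 'I_n}) wX rho X * expR (\sum_(j in X) u j)) -
  2 * expR ((\sum_j u j) / 2) * (\sum_(X : {set 'I_n}) wX rho X) =
  \sum_(X : {set 'I_n}) wX rho X *
     (expR ((\sum_(j in X) u j) / 2) - expR ((\sum_(j in ~: X) u j) / 2)) ^+ 2.
Proof.
have HC : \sum_(X : {set 'I_n}) wX rho X * expR (\sum_(j in X) u j) =
          \sum_(X : {set 'I_n}) wX rho X * expR (\sum_(j in ~: X) u j).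
  rewrite (reindex_inj (@setC_inj _)) /=.
  by apply: eq_bigr => X _; rewrite wXC.
have H1 : \sum_(X : {set 'I_n}) wX rho X * (expR (\sum_(j in X) u j) + expR (\sum_(j in ~: X) u j))
   = \sum_(X : {set 'I_n}) wX rho X * expR (\sum_(j in X) u j) +
     \sum_(X : {set 'I_n}) wX rho X * expR (\sum_(j in ~: X) u j).
  by rewrite -big_split; apply: eq_bigr => X _; rewrite mulrDr.
have H2 : \sum_(X : {set 'I_n}) wX rho X * (2 * expR ((\sum_j u j) / 2)) =
   2 * expR ((\sum_j u j) / 2) * (\sum_(X : {set 'I_n}) wX rho X).
  by rewrite mulr_sumr; apply: eq_bigr => X _; rewrite mulrC.
have H3 : \sum_(X : {set 'I_n}) wX rho X *
     (expR ((\sum_(j in X) u j) / 2) - expR ((\sum_(j in ~: X) u j) / 2)) ^+ 2 =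
   \sum_(X : {set 'I_n}) wX rho X * (expR (\sum_(j in X) u j) + expR (\sum_(j in ~: X) u j))
   - \sum_(X : {set 'I_n}) wX rho X * (2 * expR ((\sum_j u j) / 2)).
  rewrite -sumrB; apply: eq_bigr => X _; rewrite -mulrBr -amgm_sq splitC //.
rewrite H3 H1 H2 -HC; ring.
Qed.
Lemma prefix_step (R : realType) n (u : 'I_n -> R) (j : 'I_n) :
  \sum_(i : 'I_n | (i < j.+1)%N) u i = \sum_(i : 'I_n | (i < j)%N) u i + u j.
Proof.
rewrite (bigD1 j) /= ?ltnSn // addrC; congr (_ + _).
by apply: eq_bigl => i; rewrite -val_eqE /=; lia.
Qed.

Lemma main_gen (R : realType) n (rho : R) (beta : 'I_n -> R) (hb : forall j, beta j = 1 / 2) :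
  is_log_saddle_point rho beta (tauf rho).
Proof.
set W := \sum_(X : {set 'I_n}) wX rho X.
have W0 : 0 < W.
  rewrite /W (bigD1 setT) //=.
  have := wX_gt0 rho (1%g : {perm 'I_n.+1}); rewrite above1 => h.
  set y := \sum_(i | _) _.
  have h2 : 0 <= y by apply: sumr_ge0 => X _; apply: wX_ge0.
  lra.
pose E (u : 'I_n -> R) := \sum_(X : {set 'I_n}) wX rho X * expR (\sum_(j in X) u j).
pose T := \sum_(j < n) 1 / 2 * tauf rho j.
have objE : forall t : 'I_n -> R, saddle_obj rho beta t =
   - ln (E (fun j => t j - tauf rho j)) + (\sum_j (t j - tauf rho j)) / 2 + T.
  move=> t; rewrite /saddle_obj /Kcgf Ppoly_eq -/(E _) -addrA; congr (_ + _).
  rewrite /T mulr_suml -big_split /=; apply: eq_bigr => j _; rewrite hb; ring.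
have objT : saddle_obj rho beta (tauf (n:=n) rho) = - ln W + T.
  have e2 : \sum_j (tauf rho j - tauf (n:=n) rho j) = 0.
    by rewrite big1 // => j _; rewrite subrr.
  have e1 : E (fun j => tauf rho j - tauf rho j) = W.
    rewrite /E /W; apply: eq_bigr => X _.
    by rewrite big1 ?expR0 ?mulr1 // => j _; rewrite subrr.
  by rewrite objE e1 e2 mul0r addr0.
have ineq : forall u : 'I_n -> R, expR ((\sum_j u j) / 2) * W <= E u.
  move=> u; have := E_sq rho u; rewrite -/W -/(E u) => h.
  have : 0 <= \sum_(X : {set 'I_n}) wX rho X *
     (expR ((\sum_(j in X) u j) / 2) - expR ((\sum_(j in ~: X) u j) / 2)) ^+ 2.
    by apply: sumr_ge0 => X _; rewrite mulr_ge0 ?wX_ge0 ?sqr_ge0.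
  rewrite -h; lra.
have lnEW : forall u : 'I_n -> R, ln (expR ((\sum_j u j) / 2) * W) = (\sum_j u j) / 2 + ln W.
  by move=> u; rewrite lnM ?expRK // posrE ?expR_gt0.
have Epos : forall u : 'I_n -> R, 0 < E u.
  by move=> u; apply: (lt_le_trans _ (ineq u)); rewrite mulr_gt0 ?expR_gt0.
split.
  move=> t; rewrite objE objT.
  have := ineq (fun j => t j - tauf rho j).
  rewrite -ler_ln ?posrE ?mulr_gt0 ?expR_gt0 ?Epos // lnEW; lra.
move=> t tmax.
have h := tmax (tauf rho); rewrite objT objE in h.
set u := fun j => t j - tauf rho j.
have heq : E u = expR ((\sum_j u j) / 2) * W.
  apply/eqP; rewrite eq_le ineq andbT.
  rewrite -ler_ln ?posrE ?mulr_gt0 ?expR_gt0 ?Epos // lnEW; rewrite -/u in h; lra.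
have hsq : \sum_(X : {set 'I_n}) wX rho X *
     (expR ((\sum_(j in X) u j) / 2) - expR ((\sum_(j in ~: X) u j) / 2)) ^+ 2 = 0.
  rewrite -(E_sq rho u) -/W -/(E u) heq; ring.
have hab : forall r : {perm 'I_n.+1},
    \sum_(j in above r) u j = \sum_(j in ~: above r) u j.
  move=> r; apply: amgm_eq.
  have hnn : forall X : {set 'I_n}, true -> 0 <= wX rho X *
     (expR ((\sum_(j in X) u j) / 2) - expR ((\sum_(j in ~: X) u j) / 2)) ^+ 2.
    by move=> X _; rewrite mulr_ge0 ?wX_ge0 ?sqr_ge0.
  have /eqP := psumr_eq0P hnn hsq (i := above r) isT.
  rewrite mulf_eq0 => /orP [|/eqP //].
  by rewrite gt_eqF // wX_gt0.
have S0 : \sum_j u j = 0.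
  have := hab 1%g; rewrite above1 setCT big_set0 => e.
  rewrite -[RHS]e; apply: eq_bigl => j; by rewrite in_setT.
have pref : forall k, (k <= n)%N -> \sum_(i : 'I_n | (i < k)%N) u i = 0.
  move=> k; rewrite leq_eqVlt => /orP [/eqP -> | hk].
    rewrite -[RHS]S0; apply: eq_bigl => i; by rewrite ltn_ord.
  have := hab (tperm (candA (Ordinal hk)) ord_max); rewrite above_tperm => e.
  have := splitC u [set i : 'I_n | (i < k)%N]; rewrite -e S0 => e2.
  have e3 : \sum_(i in [set i : 'I_n | (i < k)%N]) u i = \sum_(i : 'I_n | (i < k)%N) u i.
    by apply: eq_bigl => i; rewrite inE.
  rewrite -e3; lra.
move=> j; have := prefix_step u j; rewrite !pref ?ltn_ord ?(ltnW (ltn_ord j)) //.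
rewrite /u add0r => /esym /eqP; rewrite subr_eq0 => /eqP //.
Qed.

Theorem lemma3 (R : realType) (m : nat) (hm : (2 <= m)%N) (rho : R) (hrho : 0 <= rho) :
  is_log_saddle_point (n := m.-1) rho (fun _ => 1 / 2)
    (fun j => (m%:R - 2 * (j : nat)%:R) * rho / 2).
Proof.
case: m hm => [|[|n]] // _.
exact: (@main_gen R n.+1 rho (fun _ => 1 / 2) (fun _ => erefl)).
Qed.
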